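(* Let $\ell$ and $B$ be positive integers with $B\ge 5\cdot 2^{\ell+1}$, and let $H$ be a graph with loops allowed on an alphabet $A$ of $\ell$ letters. For any finite word $w$ over $A$ with $|w|\ge B^{\ell}$, the graph $G_{w,H}(1,2,\dots,|w|)$ contains, as an induced subgraph, a strong $\ell$-factor $G_{w',H}(1,2,\dots,|w'|)$ of order at least $B$, where $w'$ is a factor of $w$.
   Context: A word over $A$ is a map $w:\{1,\dots,n\}\to A$, $|w|=n$, $w_i=w(i)$; $w'$ is a factor of $w$ if $w'_i=w_{i+s}$ for some fixed $s\ge0$ and all $1\le i\le|w'|$. For positive integers $u_1<\dots<u_k\le|w|$, $G_{w,H}(u_1,\dots,u_k)$ has vertex set $\{u_i\}$ and $u_iu_j$ is an edge iff ($|u_i-u_j|=1$ and $w_{u_i}w_{u_j}\notin E(H)$) or ($|u_i-u_j|>1$ and $w_{u_i}w_{u_j}\in E(H)$) (loops of $H$ handle equal letters). An $\ell$-factor is a graph $G_{w,H}(u_1,\dots,u_k)$ with $u_1,\dots,u_k$ consecutive integers and $|V(H)|=\ell$. Its letter partition consists of the nonempty sets $V_a=\{u_i:w_{u_i}=a\}$, $a\in A$; it is an $(\ell,2)$-partition, and the $\ell$-factor is strong if this is a strong $(\ell,2)$-partition, i.e., every bag $V_a$ has at least $5\cdot2^{\ell}\cdot 2$ vertices. *)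

(* Defs.v *)
From mathcomp Require Import all_boot.
Unset Strict Implicit. Unset Printing Implicit Defensive.

(* A word w over A is a seq A; position i : 'I_(size w) (0-indexed here,
   position i corresponds to position i+1 of the paper). *)
Definition wletter (A : finType) (w : seq A) (i : 'I_(size w)) : A :=
  tnth (in_tuple w) i.
Arguments wletter {A} w i.

Definition consec (u v : nat) : bool := (u.+1 == v) || (v.+1 == u).

(* Adjacency of G_{w,H}(1,...,|w|): H is a (symmetric) relation on A with
   loops allowed.  u v adjacent iff u <> v and
   (|u-v| = 1 and w_u w_v not in E(H)) or (|u-v| > 1 and w_u w_v in E(H)). *)
Definition wadj (A : finType) (H : rel A) (w : seq A) (u v : 'I_(size w)) : bool :=
  (u != v) &&
  (if consec u v then ~~ H (wletter w u) (wletter w v) else H (wletter w u) (wletter w v)).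

(* The letter partition of G_{w,H}(1..|w|) is strong (for k = 2 bags-bound):
   every nonempty bag V_a has at least 5 * 2^l * 2 vertices. *)
Definition strong_letter_partition (A : finType) (l : nat) (w : seq A) : Prop :=
  forall a : A, a \in w -> 5 * 2 ^ l * 2 <= count_mem a w.

Definition induced_sub (A : finType) (H : rel A) (w' w : seq A) : Prop :=
  exists f : 'I_(size w') -> 'I_(size w),
    injective f /\ forall u v, wadj A H w (f u) (f v) = wadj A H w' u v.

(* Main.v *)
Require Import Defs.
From mathcomp Require Import all_boot.
From mathcomp Require Import zify.

Lemma split_first (A : eqType) (a : A) (w : seq A) :
  a \in w -> exists p s, w = p ++ a :: s /\ a \notin p.
Proof.
elim: w => [//|x w IH]; rewrite in_cons.
case: (eqVneq a x) => [->|nax] /= H.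
  by exists [::], w.
have [p [s [-> ap]]] := IH H.
exists (x :: p), s; split => //; by rewrite in_cons negb_or nax.
Qed.

Lemma seg (A : eqType) (a : A) : forall n w, count_mem a w = n ->
  exists u, [/\ infix u w, a \notin u & size w <= n.+1 * size u + n].
Proof.
elim=> [|n IH] w Hc.
  exists w; split; [exact: infix_refl| |lia].
  by apply/count_memPn.
have aw : a \in w by rewrite -has_pred1 has_count Hc.
have [p [s [Ew ap]]] := @split_first A a w aw.
have cs : count_mem a s = n.
  move: Hc; rewrite Ew count_cat /= eqxx.
  move/count_memPn: ap => ->; rewrite add0n add1n; by case.
have [u' [iu au su]] := IH s cs.
have iu' : infix u' w.
  apply: infix_trans iu _; rewrite Ew -cat_rcons; exact: suffix_infix.
have ip : infix p w by rewrite Ew; exact: prefix_infix.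
have -> : size w = size p + (size s).+1 by rewrite Ew size_cat.
case: (leqP (size p) (size u')) => hp.
  exists u'; split => //; nia.
exists p; split => //; nia.
Qed.

Lemma infix_sub (A : finType) (H : rel A) (w' w : seq A) :
  infix w' w -> induced_sub A H w' w.
Proof.
case/infixP=> p [s Ew].
have hb : forall u : 'I_(size w'), size p + u < size w.
  move=> u; rewrite Ew !size_cat; have := ltn_ord u; move: (nat_of_ord u) => x.
  by rewrite ltn_add2l => h; exact: ltn_addr h.
exists (fun u => Ordinal (hb u)); split.
  by move=> u v [] /eqP; rewrite eqn_add2l => /eqP/val_inj.
move=> u v; rewrite /wadj /wletter.
have L : forall u : 'I_(size w'), tnth (in_tuple w) (Ordinal (hb u)) = tnth (in_tuple w') u.
  move=> x; pose d := tnth (in_tuple w') x.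
  rewrite (tnth_nth d) (tnth_nth d).
  have E : forall y, y < size w' -> nth d w (size p + y) = nth d w' y.
    move=> y hy; rewrite Ew nth_cat ltnNge leq_addr /= addKn nth_cat hy //.
  exact: E (ltn_ord x).
rewrite !L.
have -> : (Ordinal (hb u) != Ordinal (hb v)) = (u != v).
  by rewrite -!(inj_eq val_inj) /= eqn_add2l.
have -> : consec (Ordinal (hb u)) (Ordinal (hb v)) = consec u v.
  by rewrite /consec /= -!addnS !eqn_add2l.
by [].
Qed.

Lemma main (A : finType) (B c : nat) : 0 < B -> c <= B ->
  forall k (w : seq A), size (undup w) <= k -> B ^ k <= size w ->
  exists w', [/\ infix w' w, B <= size w' &
     forall a, a \in w' -> c <= count_mem a w'].
Proof.
move=> B0 cB; elim=> [|k IH] w Hu Hs.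
  move: Hu; rewrite leqn0 size_eq0 => /eqP Hu; case: w Hs Hu => [//|x w] _ Hu.
  by move: (mem_undup (x :: w) x); rewrite Hu mem_head in_nil.
case: (boolP [forall a : A, (a \in w) ==> (c <= count_mem a w)]) => Hall.
  exists w; split; first exact: infix_refl.
    apply: leq_trans Hs; rewrite expnS; have := expn_gt0 B k; rewrite B0 /=; nia.
  by move=> a aw; move/forallP: Hall => /(_ a); rewrite aw.
move/forallPn: Hall => [a]; rewrite negb_imply -ltnNge => /andP [aw ac].
have [u [iu au su]] := @seg A a _ w (erefl (count_mem a w)).
have Hu' : size (undup u) <= k.
  have : size (a :: undup u) <= size (undup w).
    apply: uniq_leq_size; first by rewrite /= mem_undup au undup_uniq.
    move=> x; rewrite in_cons mem_undup mem_undup => /orP [/eqP -> //|].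
    exact: mem_infix iu x.
  by move=> /= h; rewrite -ltnS; exact: leq_trans h Hu.
have Hsu : B ^ k <= size u.
  move: Hs; rewrite expnS => Hs.
  set m := count_mem a w in su ac.
  set g := B ^ k in Hs *.
  set L := size u in su *.
  set N := size w in su Hs.
  have h1 : m.+1 * g <= N by apply: leq_trans Hs; rewrite leq_mul2r; apply/orP; right; lia.
  rewrite leqNgt; apply/negP => hL.
  have : m.+1 * L.+1 <= m.+1 * g by rewrite leq_mul2l hL orbT.
  nia.
have [w' [i1 i2 i3]] := IH u Hu' Hsu.
exists w'; split => //; exact: infix_trans i1 iu.
Qed.

Theorem lemma3p12 (l B : nat) (A : finType) (H : rel A) :
  0 < l -> 0 < B -> 5 * 2 ^ l.+1 <= B ->
  #|A| = l -> symmetric H ->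
  forall w : seq A, B ^ l <= size w ->
  exists w' : seq A,
    [/\ infix w' w, B <= size w', strong_letter_partition A l w'
      & induced_sub A H w' w].
Proof.
move=> l0 B0 cB cA _ w Hs.
have Hu : size (undup w) <= l.
  rewrite -cA -(card_uniqP (undup_uniq w)); exact: max_card.
have cB' : 5 * 2 ^ l * 2 <= B by rewrite expnS in cB; lia.
have [w' [i1 i2 i3]] := @main A B _ B0 cB' l w Hu Hs.
exists w'; split => //; last exact: infix_sub.
Qed.
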